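(* For a triangle-free graph $G$ without isolated vertices, the following are equivalent: (1) $G$ is localizable; (2) $G$ is very well-covered; (3) $G$ has a perfect matching every edge of which is a strong clique; (4) $G$ has a perfect matching, and every edge of every perfect matching of $G$ is a strong clique.
   Context: A clique is strong if it intersects every maximal independent set. A graph is localizable if its vertex set admits a partition into strong cliques. A graph is well-covered if all its maximal independent sets have the same size, and very well-covered if it is well-covered, has no isolated vertices, and its independence number equals $|V(G)|/2$. *)

(* Defs.v *)
From mathcomp Require Import all_boot.
Set Implicit Arguments. Unset Strict Implicit. Unset Printing Implicit Defensive.

Section Graphs.
Variables (T : finType) (e : rel T).

Definition simple_graph : Prop := symmetric e /\ irreflexive e.

Definition independent (S : {set T}) : bool :=
  [forall x in S, forall y in S, ~~ e x y].

Definition max_independent (S : {set T}) : bool := maxset independent S.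

Definition clique (C : {set T}) : bool :=
  [forall x in C, forall y in C, (x != y) ==> e x y].

Definition strong_clique (C : {set T}) : Prop :=
  clique C /\ forall I : {set T}, max_independent I -> C :&: I != set0.

Definition localizable : Prop :=
  exists P : {set {set T}}, partition P [set: T] /\
    forall C, C \in P -> strong_clique C.

Definition alpha : nat := \max_(S : {set T} | independent S) #|S|.

Definition well_covered : Prop :=
  forall I J : {set T}, max_independent I -> max_independent J -> #|I| = #|J|.

Definition no_isolated : Prop := forall x : T, exists y, e x y.

Definition very_well_covered : Prop :=
  well_covered /\ no_isolated /\ alpha.*2 = #|T|.

Definition triangle_free : Prop :=
  forall x y z : T, ~ [&& e x y, e y z & e x z].

Definition is_edge (E : {set T}) : Prop :=
  exists x y, e x y /\ E = [set x; y].

Definition perfect_matching (M : {set {set T}}) : Prop :=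
  partition M [set: T] /\ forall E, E \in M -> is_edge E.

End Graphs.

(* Main.v *)
Require Import Defs.
From mathcomp Require Import all_boot zify.
Set Implicit Arguments. Unset Strict Implicit. Unset Printing Implicit Defensive.

Lemma bigcupD (T : finType) (A : T -> {set T}) (K : {set T}) (X : {set T}) :
  \bigcup_(i in K) (A i :\: X) = (\bigcup_(i in K) A i) :\: X.
Proof.
apply/setP=> y; rewrite inE; apply/bigcupP/andP.
  by case=> i iK; rewrite inE => /andP[yX yA]; split=> //; apply/bigcupP; exists i.
by case=> yX /bigcupP[i iK yA]; exists i => //; rewrite inE yX.
Qed.

Lemma hall (T : finType) (A : T -> {set T}) (D : {set T}) :
  (forall J : {set T}, J \subset D -> #|J| <= #|\bigcup_(i in J) A i|) ->
  exists f : T -> T, {in D &, injective f} /\ {in D, forall i, f i \in A i}.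
Proof.
have [n] := ubnP #|D|; elim: n A D => // n IH A D lt H.
case: (set_0Vmem D) => [-> | [i0 i0D]].
  by exists id; split=> i; rewrite inE.
case: (boolP [exists J : {set T}, [&& J \subset D, J != set0, J != D &
          #|\bigcup_(i in J) A i| <= #|J|]]).
- case/existsP=> J /and4P[JD J0 JD' NJle].
  have JpD : J \proper D by rewrite properEneq JD' JD.
  have [g [ginj gA]] : exists g : T -> T, {in J &, injective g} /\ {in J, forall i, g i \in A i}.
    apply: IH; first by apply: leq_trans (proper_card JpD) _.
    by move=> K KJ; apply: H; apply: subset_trans KJ JD.
  set NJ := \bigcup_(i in J) A i.
  have [h [hinj hA]] : exists h : T -> T, {in D :\: J &, injective h} /\
      {in D :\: J, forall i, h i \in A i :\: NJ}.
    apply: IH.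
      have := cardsID J D; rewrite (setIidPr JD).
      case/set0Pn: J0 => j jJ; have : 0 < #|J| by apply/card_gt0P; exists j.
      move: lt; rewrite ltnS; lia.
    move=> K KDJ; rewrite bigcupD.
    have KJ : K :&: J = set0.
      apply/setP=> x; rewrite !inE; apply/negbTE/negP=> /andP[xK xJ].
      by have := subsetP KDJ x xK; rewrite inE xJ.
    have HKJ := H (K :|: J).
    have : K :|: J \subset D.
      rewrite subUset JD andbT; apply: subset_trans KDJ _; exact: subsetDl.
    move/HKJ; rewrite bigcup_setU -/NJ.
    have := cardsID NJ ((\bigcup_(i in K) A i) :|: NJ).
    rewrite setIUl setIid.
    have -> : (\bigcup_(i in K) A i :|: NJ) :\: NJ = (\bigcup_(i in K) A i) :\: NJ.
      by apply/setP=> y; rewrite !inE; case: (y \in NJ); rewrite ?andbF ?andbT ?orbT ?orbF.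
    rewrite (cardsU K J) KJ cards0 subn0.
    rewrite (setUidPr (subsetIr _ _)).
    move: NJle; rewrite -/NJ; lia.
  exists (fun i => if i \in J then g i else h i); split.
    move=> x y xD yD /=.
    case: ifP => xJ; case: ifP => yJ.
    + by apply: ginj.
    + move=> E; have := hA y; rewrite !inE yJ yD => /(_ isT); rewrite -E.
      by rewrite (_ : g x \in NJ) //; apply/bigcupP; exists x => //; apply: gA.
    + move=> E; have := hA x; rewrite !inE xJ xD => /(_ isT); rewrite E.
      by rewrite (_ : g y \in NJ) //; apply/bigcupP; exists y => //; apply: gA.
    + by apply: hinj; rewrite inE ?xJ ?yJ ?xD ?yD.
  move=> i iD /=; case: ifP => iJ; first exact: gA.
  by have := hA i; rewrite !inE iJ iD => /(_ isT) /andP[].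
- rewrite negb_exists => /forallP Hn.
  have : 0 < #|A i0|.
    have := H [set i0]; rewrite sub1set i0D big_set1 cards1; exact.
  case/card_gt0P=> v vA.
  have [f' [finj fA]] : exists f : T -> T, {in D :\ i0 &, injective f} /\
      {in D :\ i0, forall i, f i \in A i :\ v}.
    apply: IH.
      by move: lt; rewrite (cardsD1 i0 D) i0D.
    move=> K KD; rewrite bigcupD.
    case: (eqVneq K set0) => [-> | K0]; first by rewrite cards0.
    have KD' : K \subset D by apply: subset_trans KD (subsetDl _ _).
    have KnD : K != D.
      apply/eqP=> E; have := subsetP KD i0; rewrite E i0D !inE eqxx => /(_ isT).
      done.
    have := Hn K; rewrite KD' K0 KnD /= -ltnNge => lt2.
    have := cardsD1 v (\bigcup_(i in K) A i); case: (v \in _) => /=; lia.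
  exists (fun i => if i == i0 then v else f' i); split.
    move=> x y xD yD /=.
    case: eqP => [-> | /eqP xi]; case: eqP => [-> | /eqP yi] //.
    + move=> E; have := fA y; rewrite !inE yi yD => /(_ isT).
      by rewrite -E eqxx.
    + move=> E; have := fA x; rewrite !inE xi xD => /(_ isT).
      by rewrite E eqxx.
    + by apply: finj; rewrite !inE ?xi ?yi ?xD ?yD.
  move=> i iD /=; case: eqP => [-> // | /eqP ii].
  by have := fA i; rewrite !inE ii iD => /(_ isT) /andP[].
Qed.

Lemma indepP (T : finType) (e : rel T) (S : {set T}) :
  reflect (forall x y, x \in S -> y \in S -> ~~ e x y) (independent e S).
Proof.
apply: (iffP forallP) => [H x y xS yS | H x].
  by have /implyP/(_ xS)/forallP/(_ y)/implyP/(_ yS) := H x.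
by apply/implyP=> xS; apply/forallP=> y; apply/implyP=> yS; apply: H.
Qed.

Lemma indep_sub (T : finType) (e : rel T) (S J : {set T}) :
  S \subset J -> independent e J -> independent e S.
Proof.
move=> SJ /indepP H; apply/indepP=> x y xS yS; apply: H; exact: (subsetP SJ).
Qed.

Lemma indep0 (T : finType) (e : rel T) : independent e set0.
Proof. by apply/indepP=> x y; rewrite inE. Qed.

Lemma max_indep (T : finType) (e : rel T) (I : {set T}) :
  max_independent e I -> independent e I.
Proof. by case/maxsetP. Qed.

Lemma ex_max (T : finType) (e : rel T) (S : {set T}) :
  independent e S -> exists J, max_independent e J /\ S \subset J.
Proof. by move=> H; case: (maxset_exists H) => J ? ?; exists J. Qed.

Lemma alpha_max (T : finType) (e : rel T) (I : {set T}) :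
  well_covered e -> max_independent e I -> alpha e = #|I|.
Proof.
move=> wc mI; apply/eqP; rewrite eqn_leq; apply/andP; split.
  apply/bigmax_leqP=> S iS; have [J [mJ SJ]] := ex_max iS.
  by rewrite (wc I J mI mJ) subset_leq_card.
by rewrite /alpha; apply: leq_bigmax_cond; apply: max_indep mI.
Qed.

Definition nbh (T : finType) (e : rel T) (S : {set T}) :=
  \bigcup_(s in S) [set y | e s y].

Lemma swap (T : finType) (e : rel T) (S J : {set T}) :
  symmetric e -> irreflexive e -> well_covered e -> max_independent e J ->
  independent e S -> #|S :\: J| <= #|J :&: nbh e S|.
Proof.
move=> sym irr wc mJ iS.
set J' := (J :\: nbh e S) :|: (S :\: J).
have iJ' : independent e J'.
  apply/indepP=> x y; rewrite !inE.
  have /indepP iJ := max_indep mJ; move/indepP: iS => iS.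
  have nb : forall s z, s \in S -> e s z -> z \in nbh e S.
    by move=> s z sS esz; apply/bigcupP; exists s; rewrite ?inE.
  case/orP=> [/andP[xN xJ] | /andP[xJ xS]]; case/orP=> [/andP[yN yJ] | /andP[yJ yS]].
  - exact: iJ.
  - by apply/negP=> exy; move/negP: xN; apply; apply: (nb y); rewrite // sym.
  - by apply/negP=> exy; move/negP: yN; apply; apply: (nb x).
  - exact: iS.
have [J'' [mJ'' sub]] := ex_max iJ'.
have := subset_leq_card sub; rewrite -(wc J J'' mJ mJ'').
have disj : (J :\: nbh e S) :&: (S :\: J) = set0.
  by apply/setP=> z; rewrite !inE; case: (z \in J); rewrite ?andbF.
rewrite /J' cardsU disj cards0 subn0.
have := cardsID (nbh e S) J; lia.
Qed.

Lemma nbh_big (T : finType) (e : rel T) (S : {set T}) :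
  symmetric e -> irreflexive e -> well_covered e -> no_isolated e ->
  independent e S -> #|S| <= #|nbh e S|.
Proof.
move=> sym irr wc ni.
have [n] := ubnP #|S|; elim: n S => // n IH S lt iS.
case: (set_0Vmem S) => [-> | [s sS]]; first by rewrite cards0.
have [t est] := ni s.
have it : independent e [set t] by apply/indepP=> x y; rewrite !inE => /eqP-> /eqP->; rewrite irr.
have [J [mJ tJ]] := ex_max it.
have sJ : s \notin J.
  apply/negP=> sJ; have /indepP := max_indep mJ.
  by move/(_ s t sJ (subsetP tJ t (set11 t))); rewrite est.
set S2 := S :&: J.
have lt2 : #|S2| < #|S|.
  apply: proper_card; rewrite properE subsetIl; apply/subsetPn; exists s => //.
  by rewrite inE (negbTE sJ) andbF.
have IH2 := IH S2 (leq_trans lt2 (lt : #|S| <= n)) (indep_sub (subsetIl _ _) iS).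
have sw := swap sym irr wc mJ iS.
have disj : (J :&: nbh e S) :&: nbh e S2 = set0.
  apply/setP=> z; rewrite !inE; apply/negbTE/negP=> /andP[/andP[zJ _] /bigcupP[x]].
  rewrite !inE => /andP[_ xJ] exz.
  by have /indepP/(_ x z xJ zJ) := max_indep mJ; rewrite exz.
have sub : (J :&: nbh e S) :|: nbh e S2 \subset nbh e S.
  rewrite subUset subsetIr; apply/subsetP=> z /bigcupP[x]; rewrite inE => xS2 exz; move: xS2; rewrite /S2 inE => /andP[xS _].
  by apply/bigcupP; exists x => //; rewrite inE.
have := subset_leq_card sub; rewrite cardsU disj cards0 subn0.
have := cardsID J S; rewrite -/S2; lia.
Qed.

Lemma pm_count (T : finType) (M : {set {set T}}) (I : {set T}) :
  partition M [set: T] -> \sum_(E in M) \sum_(z in E) (z \in I : nat) = #|I|.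
Proof.
case/and3P=> /eqP cov triv _.
rewrite -(big_trivIset _ triv) cov -sum1_card (big_mkcond (mem I)) /=.
apply: eq_big => [z | z _]; first by rewrite in_setT.
by case: (z \in I).
Qed.

Lemma edge_sum (T : finType) (x y : T) (I : {set T}) :
  x != y -> \sum_(z in [set x; y]) (z \in I : nat) = (x \in I) + (y \in I).
Proof.
move=> xy; rewrite big_setU1 ?big_set1 // inE; exact: xy.
Qed.

Lemma pm_size (T : finType) (e : rel T) (M : {set {set T}}) :
  irreflexive e -> perfect_matching e M -> #|T| = (#|M|).*2.
Proof.
move=> irr [pM eM]; rewrite -cardsT (card_partition pM) -muln2 -sum_nat_const.
apply: eq_bigr => E /eM [x [y [exy ->]]]; rewrite cards2.
by case: eqP exy => // ->; rewrite irr.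
Qed.

Lemma cliqueP (T : finType) (e : rel T) (S : {set T}) :
  reflect (forall x y, x \in S -> y \in S -> x != y -> e x y) (clique e S).
Proof.
apply: (iffP forallP) => [H x y xS yS | H x].
  by have /implyP/(_ xS)/forallP/(_ y)/implyP/(_ yS)/implyP := H x.
apply/implyP=> xS; apply/forallP=> y; apply/implyP=> yS; apply/implyP; exact: H.
Qed.

Lemma edge_le1 (T : finType) (e : rel T) (E I : {set T}) :
  irreflexive e -> is_edge e E -> independent e I ->
  \sum_(z in E) (z \in I : nat) <= 1.
Proof.
move=> irr [x [y [exy ->]]] /indepP iI.
have xy : x != y by apply/eqP=> xy; move: exy; rewrite xy irr.
rewrite edge_sum //; case xI: (x \in I); case yI: (y \in I) => //.
by have := iI _ _ xI yI; rewrite exy.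
Qed.

Lemma strong_edge (T : finType) (e : rel T) :
  symmetric e -> irreflexive e -> triangle_free e -> no_isolated e ->
  forall C, strong_clique e C -> is_edge e C.
Proof.
move=> sym irr tf ni C [/cliqueP cl st].
have [I0 [m0 _]] := ex_max (indep0 e).
have /set0Pn [x /setIP [xC _]] := st I0 m0.
case: (boolP [exists y, (y \in C) && (y != x)]).
- case/existsP => y /andP [yC yx].
  have exy : e x y by apply: cl => //; rewrite eq_sym.
  exists x, y; split => //.
  apply/setP=> z; rewrite !inE; apply/idP/idP.
    move=> zC; apply/negPn/negP; rewrite negb_or => /andP[zx zy].
    apply: (tf x y z); rewrite exy (cl y z) ?(cl x z) //; by rewrite eq_sym.
  by case/orP=> /eqP->.
- move/existsPn => H.
  have [t ext] := ni x.
  have it : independent e [set t] by apply/indepP=> a b; rewrite !inE => /eqP-> /eqP->; rewrite irr.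
  have [J [mJ tJ]] := ex_max it.
  have /set0Pn [z /setIP [zC zJ]] := st J mJ.
  have zx : z = x by apply/eqP; have := H z; rewrite zC /= negbK.
  subst z.
  by have /indepP/(_ x t zJ (subsetP tJ t (set11 t))) := max_indep mJ; rewrite ext.
Qed.

Lemma vwc_pm (T : finType) (e : rel T) :
  symmetric e -> irreflexive e -> very_well_covered e -> exists M, perfect_matching e M.
Proof.
move=> sym irr [wc [ni a2]].
have [I0 [m0 _]] := ex_max (indep0 e).
have aI := alpha_max wc m0.
have iI := max_indep m0.
have [f [finj fA]] := @hall T (fun x => [set y | e x y]) I0
  (fun J JI => nbh_big sym irr wc ni (indep_sub JI iI)).
have efx : forall x, x \in I0 -> e x (f x) by move=> x /fA; rewrite inE.
have fout : forall x, x \in I0 -> f x \notin I0.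
  move=> x xI; apply/negP => fI; have := indepP _ _ iI x (f x) xI fI; by rewrite efx.
have img : f @: I0 = ~: I0.
  apply/eqP; rewrite eqEcard; apply/andP; split.
    by apply/subsetP=> _ /imsetP[x xI ->]; rewrite inE; exact: fout.
  rewrite card_in_imset //; have := cardsC I0; move: a2; rewrite aI -muln2; lia.
exists [set [set x; f x] | x in I0]; split; last first.
  move=> E /imsetP[x xI ->]; exists x, (f x); split => //; exact: efx.
apply/and3P; split.
- apply/eqP/setP=> v; rewrite in_setT /cover; apply/bigcupP.
  case: (boolP (v \in I0)) => vI.
    by exists [set v; f v]; [apply/imsetP; exists v | rewrite !inE eqxx].
  have : v \in f @: I0 by rewrite img inE.
  case/imsetP=> x xI ->.
  by exists [set x; f x]; [apply/imsetP; exists x | rewrite !inE eqxx orbT].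
- apply/trivIsetP=> A B /imsetP[x xI ->] /imsetP[x' xI' ->] neq.
  rewrite -setI_eq0; apply/eqP/setP=> z; rewrite !inE.
  have xx' : x != x' by apply: contraNneq neq => ->.
  apply/negbTE; apply/negP => /andP[/orP[/eqP zx|/eqP zf] /orP[/eqP zx'|/eqP zf']].
  + by move: xx'; rewrite -zx zx' eqxx.
  + by move: (fout x' xI'); rewrite -zf' zx xI.
  + by move: (fout x xI); rewrite -zf zx' xI'.
  + by move: xx'; rewrite (finj x x' xI xI') ?eqxx // -zf zf'.
- apply/negP=> /imsetP[x xI E].
  have : x \in [set x; f x] by rewrite !inE eqxx.
  by rewrite -E inE.
Qed.

Theorem mainTheorem8 (T : finType) (e : rel T) :
  simple_graph e -> triangle_free e -> no_isolated e ->
  [/\ (localizable e <-> very_well_covered e),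
      (very_well_covered e <->
         exists M, perfect_matching e M /\ forall E, E \in M -> strong_clique e E)
    & ((exists M, perfect_matching e M /\ forall E, E \in M -> strong_clique e E) <->
         ((exists M, perfect_matching e M) /\
          forall M, perfect_matching e M -> forall E, E \in M -> strong_clique e E))].
Proof.
move=> [sym irr] tf ni.
have S2E := strong_edge sym irr tf ni.
have L13 : localizable e <->
    exists M, perfect_matching e M /\ forall E, E \in M -> strong_clique e E.
  split.
    by case=> P [pP sP]; exists P; split => //; split => // E /sP /S2E.
  by case=> M [[pM _] sM]; exists M; split.
have B32 : (exists M, perfect_matching e M /\ forall E, E \in M -> strong_clique e E) ->
    very_well_covered e.
  case=> M [pmM sM].
  have cntI : forall I, max_independent e I -> #|I| = #|M|.
    move=> I mI; rewrite -(pm_count I (proj1 pmM)) -sum1_card.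
    apply: eq_bigr => E EM.
    have [x [y [exy EE]]] := proj2 pmM E EM.
    have [_ st] := sM E EM.
    have xy : x != y by apply/eqP=> xy; move: exy; rewrite xy irr.
    rewrite EE edge_sum //.
    have /indepP iI := max_indep mI.
    have := st I mI; rewrite EE.
    case/set0Pn => z; rewrite !inE => /andP[/orP[/eqP->|/eqP->] zI].
      rewrite zI; case yI: (y \in I) => //; by have := iI _ _ zI yI; rewrite exy.
    rewrite zI; case xI: (x \in I) => //; by have := iI _ _ xI zI; rewrite exy.
  have wc : well_covered e by move=> I J mI mJ; rewrite !cntI.
  split => //; split => //.
  have [I0 [m0 _]] := ex_max (indep0 e).
  by rewrite (alpha_max wc m0) cntI // (pm_size irr pmM).
have C24 : very_well_covered e -> (exists M, perfect_matching e M) /\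
    forall M, perfect_matching e M -> forall E, E \in M -> strong_clique e E.
  move=> vwc; split; first exact: vwc_pm.
  move=> M pmM E EM; have [wc [_ a2]] := vwc.
  have [x [y [exy EE]]] := proj2 pmM E EM.
  split.
    apply/cliqueP=> a b; rewrite EE !inE => ha hb.
    case/orP: ha => /eqP->; case/orP: hb => /eqP->; rewrite ?eqxx // => _;
      by rewrite ?exy // sym exy.
  move=> I mI; apply/negP => /eqP E0.
  have xI : x \notin I.
    apply/negP=> xI; have : x \in E :&: I by rewrite inE EE !inE eqxx xI.
    by rewrite E0 inE.
  have yI : y \notin I.
    apply/negP=> yI; have : y \in E :&: I by rewrite inE EE !inE eqxx orbT yI.
    by rewrite E0 inE.
  have xy : x != y by apply/eqP=> xy; move: exy; rewrite xy irr.
  have hc : \sum_(E' in M | E' != [set x; y]) \sum_(z in E') (z \in I : nat) = #|I|.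
    have := pm_count I (proj1 pmM).
    rewrite (bigD1 E EM) /= EE edge_sum // (negbTE xI) (negbTE yI) /= add0n.
    by move=> <-.
  have le : \sum_(E' in M | E' != [set x; y]) \sum_(z in E') (z \in I : nat) <=
            \sum_(E' in M | E' != [set x; y]) 1.
    apply: leq_sum => E' /andP[E'M _].
    exact: edge_le1 irr (proj2 pmM E' E'M) (max_indep mI).
  have h1 : \sum_(E' in M) 1 = 1 + \sum_(E' in M | E' != E) 1 := bigD1 E EM.
  rewrite sum1_card EE in h1.
  have := pm_size irr pmM; rewrite -a2 (alpha_max wc mI) -!muln2.
  move: le h1 hc; lia.
have D43 : ((exists M, perfect_matching e M) /\
    forall M, perfect_matching e M -> forall E, E \in M -> strong_clique e E) ->
    exists M, perfect_matching e M /\ forall E, E \in M -> strong_clique e E.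
  by case=> [[M pmM] H]; exists M; split => //; exact: H M pmM.
split.
- by split => [/L13/B32 // | /C24/D43/L13 //].
- by split => [/C24/D43 // | /B32].
- by split => [/B32/C24 // | /D43].
Qed.
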